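(* Let $p$ be an odd prime, let $G$ be a proper subgroup of the multiplicative group $\mathbb{F}_p^*=\mathbb{F}_p\setminus\{0\}$, and let $\lambda\in G$. Then there do not exist sets $A,B\subseteq \mathbb{F}_p^*$ with $|A|\ge 2$ and $|B|\ge 2$ such that \[ AB=(G-\lambda)\setminus\{0\}. \]
   Context: $\mathbb{F}_p$ denotes the field with $p$ elements. For $A,B\subseteq\mathbb{F}_p$, the product set is $AB=\{ab: a\in A,\ b\in B\}$, and $G-\lambda=\{g-\lambda: g\in G\}$. *)

(* Defs.v *)
From mathcomp Require Import all_boot all_order all_algebra all_fingroup.
Set Implicit Arguments. Unset Strict Implicit. Unset Printing Implicit Defensive.
Import GRing.Theory.
Local Open Scope ring_scope.

Definition prodset (R : finNzRingType) (A B : {set R}) : {set R} :=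
  [set a * b | a in A, b in B].

Definition shift_nonzero (R : finUnitRingType) (G : {set {unit R}}) (lam : R)
  : {set R} :=
  [set (val g - lam) | g in G] :\ 0.

(* Main.v *)
Require Import Defs.
From mathcomp Require Import all_boot all_order all_algebra all_fingroup all_solvable all_field.
From mathcomp Require Import zify ring lra.
Set Implicit Arguments. Unset Strict Implicit. Unset Printing Implicit Defensive.
Import GRing.Theory.
Local Open Scope ring_scope.

Lemma coef_linX (R : comNzRingType) (b e : R) k j :
  ((b *: 'X + e%:P) ^+ k)`_j = (b ^+ j * e ^+ (k - j)) *+ 'C(k, j).
Proof.
elim: k j => [|k IH] j.
  by rewrite expr0 coef1 bin0n; case: j => [|j] //=; rewrite !expr0 mulr1.
rewrite exprS mulrDl -scalerAl coefD coefZ coefCM coefXM.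
case: j => [|j] /=.
  by rewrite mulr0 add0r IH !bin0 !mulr1n !expr0 !mul1r subn0 exprS.
rewrite !IH binS mulrnDr addrC !mulrnAr; congr (_ + _); last first.
  by rewrite mulrA -exprS subSS.
case: (leqP j.+1 k) => hjk.
  by rewrite mulrCA -exprS subSS; congr (_ * (_ ^+ _) *+ _); lia.
by rewrite bin_small // !mulr0n.
Qed.

Lemma fact_neq0 (R : idomainType) N : (forall k, (0 < k <= N)%N -> k%:R != 0 :> R) ->
  (N`!)%:R != 0 :> R.
Proof.
elim: N => [|N IH] h; first by rewrite fact0 oner_neq0.
rewrite factS natrM mulf_neq0 //; first by apply: h; rewrite leqnn.
apply: IH => k /andP[k0 kN]; apply: h; rewrite k0 /=; lia.
Qed.

Lemma bin_neq0 (R : idomainType) N j : (j <= N)%N -> (forall k, (0 < k <= N)%N -> k%:R != 0 :> R) ->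
  ('C(N, j))%:R != 0 :> R.
Proof.
move=> hj h; have := fact_neq0 h; rewrite -(bin_fact hj) natrM.
by apply: contra => /eqP ->; rewrite mul0r.
Qed.

Lemma dvdXn_coef (R : fieldType) n (p : {poly R}) :
  (forall i, (i < n)%N -> p`_i = 0) -> 'X^n %| p.
Proof.
move=> h; rewrite -(poly_take_drop n p).
have -> : take_poly n p = 0.
  by apply/polyP => i; rewrite coef_take_poly coef0; case: ifP => // /h.
by rewrite add0r dvdp_mull // dvdpp.
Qed.

Lemma comp_Xn (R : comNzRingType) n (q : {poly R}) : 'X^n \Po q = q ^+ n.
Proof.
elim: n => [|n IH]; first by rewrite expr0 comp_polyC.
by rewrite exprS comp_polyM comp_polyX IH exprS.
Qed.

Lemma comp_exp (R : comNzRingType) n (p q : {poly R}) : (p ^+ n) \Po q = (p \Po q) ^+ n.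
Proof.
elim: n => [|n IH]; first by rewrite !expr0 comp_polyC.
by rewrite !exprS comp_polyM IH.
Qed.

Lemma kernel_exists (R : fieldType) n (b : 'I_n -> R) : (0 < n)%N ->
  exists w : 'I_n -> R, (exists i, w i != 0) /\
    forall k, (k < n.-1)%N -> \sum_i w i * b i ^+ k = 0.
Proof.
move=> n0.
pose M : 'M[R]_(n, n.-1) := \matrix_(i, k) b i ^+ (k : nat).
have rk : (0 < \rank (kermx M))%N by rewrite mxrank_ker; have := rank_leq_col M; lia.
have KM : kermx M != 0 by rewrite -mxrank_eq0 -lt0n.
have [i0 hi0] : exists i0, row i0 (kermx M) != 0.
  apply/existsP; apply: contraR KM => /existsPn h; apply/eqP/row_matrixP => i.
  by rewrite row0; exact/eqP/negPn/h.
pose v := row i0 (kermx M).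
exists (fun i => v 0 i); split.
  apply/existsP; apply: contraR hi0 => /existsPn h; apply/eqP/matrixP => i j.
  by rewrite (ord1 i) [RHS]mxE; exact/eqP/negPn/h.
move=> k hk.
have : (v *m M) 0 (Ordinal hk) = 0 by rewrite /v -row_mul mulmx_ker row0 mxE.
move=> e; rewrite mxE in e; rewrite -[X in _ = X]e.
by apply: eq_bigr => i _; rewrite [M _ _]mxE.
Qed.

Lemma vander_zero (R : fieldType) n (b : 'I_n -> R) (w : 'I_n -> R) : injective b ->
  (forall k, (k < n)%N -> \sum_i w i * b i ^+ k = 0) -> forall i, w i = 0.
Proof.
move=> bi h.
pose V := Vandermonde n (\row_j b j).
have VU : V \in unitmx.
  rewrite unitmxE det_Vandermonde unitfE; apply/prodf_neq0 => i _.
  apply/prodf_neq0 => j hij; rewrite !mxE subr_eq0 (inj_eq bi).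
  by apply: contraTN hij => /eqP ->; rewrite ltnn.
pose W : 'cV_n := \col_i w i.
have VW : V *m W = 0.
  apply/matrixP => k j; rewrite !mxE -[RHS](h k (ltn_ord k)).
  by apply: eq_bigr => i _; rewrite !mxE mulrC.
move=> i; have := congr1 (mulmx (invmx V)) VW; rewrite mulKmx // mulmx0.
by move/matrixP/(_ i 0); rewrite !mxE.
Qed.

Definition stepF (R : comNzRingType) n (c0 : R) (c e b : 'I_n -> R) k : {poly R} :=
  c0%:P + \sum_i c i *: (b i *: 'X + (e i)%:P) ^+ k.

Lemma coef_stepF (R : comNzRingType) n (c0 : R) (c e b : 'I_n -> R) k j :
  (stepF c0 c e b k)`_j = (if j == 0%N then c0 else 0) +
     (\sum_i c i * (b i ^+ j * e i ^+ (k - j))) *+ 'C(k, j).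
Proof.
rewrite /stepF coefD coefC coef_sum -sumrMnl; congr (_ + _).
by apply: eq_bigr => i _; rewrite coefZ coef_linX mulrnAr.
Qed.

Lemma comp_lin (R : comNzRingType) (b l x : R) :
  (b *: 'X + l%:P) \Po ('X + x%:P) = b *: 'X + (x * b + l)%:P.
Proof.
rewrite comp_polyD comp_polyZ comp_polyX comp_polyC scalerDr -addrA; congr (_ + _).
by rewrite -mul_polyC -polyCM polyCD mulrC.
Qed.

Lemma stepF_comp (R : comNzRingType) n (c0 : R) (c e b : 'I_n -> R) k x :
  stepF c0 c e b k \Po ('X + x%:P) = stepF c0 c (fun i => x * b i + e i) b k.
Proof.
rewrite /stepF comp_polyD comp_polyC linear_sum; congr (_ + _).
apply: eq_bigr => i _.
by rewrite /= comp_polyZ comp_exp comp_lin.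
Qed.

Lemma local_mult (R : fieldType) d n (l x c0 : R) (c b : 'I_n -> R) :
  (forall j, (j < n)%N -> ('C(n.-1, j))%:R != 0 :> R) ->
  stepF c0 c (fun=> l) b n.-1 = 0 ->
  (forall i, (x * b i + l) ^+ d = 1) ->
  ('X - x%:P) ^+ n %| stepF c0 c (fun=> l) b (d + n.-1).
Proof.
move=> hC H0 hx.
set G := stepF c0 c (fun=> l) b (d + n.-1) \Po ('X + x%:P).
have HG : 'X^n %| G.
  apply: dvdXn_coef => j hj.
  have := congr1 (fun p => (p \Po ('X + x%:P))`_j) H0.
  rewrite /= comp_poly0 coef0 stepF_comp coef_stepF => H1.
  rewrite /G stepF_comp coef_stepF.
  have ee : forall i, (x * b i + l) ^+ (d + n.-1 - j) = (x * b i + l) ^+ (n.-1 - j).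
    by move=> i; rewrite -addnBA; [rewrite exprD hx mul1r | lia].
  under eq_bigr do rewrite ee.
  clear ee; move: H1; case: j hj => [|j] hj.
    by rewrite !bin0 !mulr1n !subn0.
  rewrite /= !add0r => /eqP; rewrite -mulr_natr mulf_eq0 (negbTE (hC _ hj)) orbF.
  by move/eqP ->; rewrite mul0rn.
have /dvdpP[Q HQ] := HG.
rewrite -(comp_polyXaddC_K (stepF c0 c (fun=> l) b (d + n.-1)) x) -/G HQ comp_polyM comp_Xn.
exact: dvdp_mull (dvdpp _).
Qed.

Lemma coefM0 (R : comNzRingType) (p q : {poly R}) : (p * q)`_0 = p`_0 * q`_0.
Proof. by rewrite coefM big_ord_recl big_ord0 addr0. Qed.

Lemma coefM1 (R : comNzRingType) (p q : {poly R}) :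
  (p * q)`_1 = p`_0 * q`_1 + p`_1 * q`_0.
Proof. by rewrite coefM !big_ord_recl big_ord0 addr0. Qed.

Lemma good_prod (R : comNzRingType) (I : Type) (r : seq I) (F : I -> {poly R}) (s : I -> R) :
  (forall i, (F i)`_1 = (F i)`_0 * s i) ->
  (\prod_(i <- r) F i)`_1 = (\prod_(i <- r) F i)`_0 * \sum_(i <- r) s i.
Proof.
move=> h; elim: r => [|x r IH]; first by rewrite !big_nil coef1 mulr0.
rewrite !big_cons coefM1 coefM0 IH h; ring.
Qed.

Lemma good_exp (R : comNzRingType) (p : {poly R}) s k :
  p`_1 = p`_0 * s -> (p ^+ k)`_1 = (p ^+ k)`_0 * (s *+ k).
Proof.
move=> h; elim: k => [|k IH]; first by rewrite expr0 coef1 mulr0n mulr0.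
rewrite exprS coefM1 coefM0 IH h mulrS; ring.
Qed.

Lemma dvdp_prod_seq (R : fieldType) (s : seq R) n (F : {poly R}) : uniq s ->
  (forall x, x \in s -> ('X - x%:P) ^+ n %| F) ->
  \prod_(x <- s) ('X - x%:P) ^+ n %| F.
Proof.
elim: s => [|x s IH] /=; first by rewrite big_nil dvd1p.
move=> /andP[xs us] h; rewrite big_cons Gauss_dvdp.
  by rewrite h ?mem_head // IH // => y ys; apply: h; rewrite in_cons ys orbT.
apply: coprimep_expl; rewrite coprimep_sym coprimep_XsubC rootE horner_prod.
rewrite prodf_seq_neq0; apply/allP => y ys /=; rewrite horner_exp hornerXsubC expf_neq0 //.
by rewrite subr_eq0; apply: contraNN xs => /eqP ->.
Qed.

Lemma size_index_enum_ord n : size (index_enum 'I_n) = n.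
Proof. by rewrite [index_enum _]unlock -enumT size_enum_ord. Qed.

Lemma size_prod_lin (R : fieldType) (I : Type) (r : seq I) (u v : I -> R) :
  (size (\prod_(i <- r) ((u i)%:P + v i *: 'X))%R <= (size r).+1)%N.
Proof.
elim: r => [|x r IH]; first by rewrite big_nil size_poly1.
rewrite big_cons /=; apply: leq_trans (size_mul_leq _ _) _.
have : (size ((u x)%:P + v x *: 'X)%R <= 2)%N.
  apply: leq_trans (size_add _ _) _; rewrite geq_max.
  apply/andP; split; first by apply: leq_trans (size_polyC_leq1 _) _.
  by apply: leq_trans (size_scale_leq _ _) _; rewrite size_polyX.
set P := \prod_(j <- r) _ in IH *; move: IH; lia.
Qed.

Lemma sum_split (R : comNzRingType) n (q : nat -> R) (mu : nat -> R) : (0 < n)%N ->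
  (forall k, (0 < k < n)%N -> mu k = 0) ->
  \sum_(k < n.+1) q k * mu (n.+1 - k)%N = q 0%N * mu n.+1 + q 1%N * mu n.
Proof.
case: n => [//|n] _ h.
rewrite big_ord_recl big_ord_recl big1 ?addr0 ?addrA //= => k _.
rewrite h ?mulr0 // /bump !leq0n /=; have := ltn_ord k; lia.
Qed.

Lemma mu_rec (R : fieldType) n (b c : 'I_n -> R) : (forall i, b i != 0) ->
  (forall k, (0 < k < n)%N -> \sum_i c i * b i ^+ k = 0) ->
  \sum_i c i * b i ^+ n.+1 = (\sum_i b i) * \sum_i c i * b i ^+ n.
Proof.
move=> b0 hmu.
case: (posnP n) => [n0|n0].
  by subst n; rewrite !big_ord0 mulr0.
pose Pt := \prod_(j <- index_enum 'I_n) ((1:R)%:P + (- b j) *: 'X).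
have sPt : (size Pt <= n.+1)%N.
  by have := size_prod_lin (index_enum 'I_n) (fun=> (1:R)) (fun j => - b j); rewrite size_index_enum_ord.
have Pt0 : Pt`_0 = 1.
  rewrite -horner_coef0 /Pt horner_prod big1_seq // => j _.
  by rewrite hornerD hornerC hornerZ hornerX mulr0 addr0.
have Pt1 : Pt`_1 = - \sum_j b j.
  rewrite /Pt (@good_prod _ _ _ _ (fun j => - b j)); last first.
    by move=> j; rewrite !coefD !coefC !coefZ !coefX /= mulr1 mulr0 addr0 add0r mul1r.
  by rewrite -/Pt Pt0 mul1r sumrN.
have root : forall i, Pt.[(b i)^-1] = 0.
  move=> i; rewrite /Pt horner_prod; apply/eqP; rewrite prodf_seq_eq0; apply/hasP.
  exists i; first by rewrite mem_index_enum.
  by rewrite /= hornerD hornerC hornerZ hornerX mulNr mulfV // subrr.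
have : \sum_i c i * b i ^+ n.+1 * Pt.[(b i)^-1] = 0.
  by rewrite big1 // => i _; rewrite root mulr0.
rewrite (eq_bigr (fun i => \sum_(k < n.+1) Pt`_k * (c i * b i ^+ (n.+1 - k)%N))); last first.
  move=> i _; rewrite (horner_coef_wide _ sPt) mulr_sumr; apply: eq_bigr => k _.
  by rewrite exprVn (expfB _ (ltn_ord k)) !mulrA; congr (_ * _); rewrite mulrC !mulrA.
rewrite exchange_big /=; under eq_bigr do rewrite -mulr_sumr.
rewrite (@sum_split _ n (fun k => Pt`_k) (fun k => \sum_i c i * b i ^+ k)) //.
rewrite Pt0 Pt1 mul1r mulNr => /eqP.
by rewrite addr_eq0 opprK => /eqP.
Qed.

Lemma stepanov (R : fieldType) d n m (l : R) (a : 'I_m -> R) (b : 'I_n -> R) :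
  (0 < n)%N -> (1 < d)%N -> injective a -> injective b ->
  (forall i, a i != 0) -> (forall j, b j != 0) ->
  l != 0 -> l ^+ d = 1 -> (forall i j, (a i * b j + l) ^+ d = 1) ->
  (forall k, (0 < k <= d + n)%N -> k%:R != 0 :> R) ->
  (n * m.+1 <= d + n.-1)%N /\
  ((n * m.+1 = d + n.-1)%N ->
     (d.-1)%:R * \sum_j b j = - l * (n * n.+1)%:R * \sum_i (a i)^-1).
Proof.
move=> n0 d1 ai bi a0 b0 l0 ld hab hchar.
have [w [[i0 wi0] hw]] := kernel_exists b n0.
pose c i := w i / b i.
pose mu k := \sum_i c i * b i ^+ k.
have mu0 : forall k, (0 < k < n)%N -> mu k = 0.
  move=> k /andP[k0 kn]; rewrite /mu -[RHS](hw k.-1); last by lia.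
  apply: eq_bigr => i _; rewrite /c -{1}(prednK k0) exprS mulrA divfK //.
pose c0 := - l ^+ n.-1 * \sum_i c i.
pose fl := fun (_ : 'I_n) => l.
have H0 : stepF c0 c fl b n.-1 = 0.
  apply/polyP => j; rewrite coef_stepF coef0.
  case: j => [|j].
    rewrite /= bin0 mulr1n subn0 /c0 mulr_sumr -big_split /= big1 // => i _.
    by rewrite /fl expr0 mul1r mulNr [X in - X + _]mulrC addNr.
  rewrite /= add0r; case: (ltnP j.+1 n) => hj.
    rewrite (_ : \sum_i _ = mu j.+1 * l ^+ (n.-1 - j.+1)).
      by rewrite mu0 ?mul0r ?mul0rn //; lia.
    by rewrite /mu mulr_suml; apply: eq_bigr => i _; rewrite mulrA.
  by rewrite bin_small ?mulr0n //; lia.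
pose N := (d + n.-1)%N.
pose F := stepF c0 c fl b N.
have hC : forall j, (j < n)%N -> ('C(n.-1, j))%:R != 0 :> R.
  by move=> j hj; apply: bin_neq0; [lia | move=> k hk; apply: hchar; lia].
pose r := index_enum 'I_m.
pose s := 0 :: map a r.
have us : uniq s.
  rewrite /= (map_inj_uniq ai) index_enum_uniq andbT; apply/mapP => -[i _ ai0].
  by move: (a0 i); rewrite -ai0 eqxx.
pose P := \prod_(i <- r) ('X - (a i)%:P) ^+ n.
pose Q := \prod_(x <- s) ('X - x%:P) ^+ n.
have QP : Q = 'X^n * P by rewrite /Q big_cons big_map subr0.
have QF : Q %| F.
  apply: dvdp_prod_seq => // x; rewrite in_cons => /orP[/eqP -> | /mapP[i _ ->]].
    by apply: local_mult => // i; rewrite mul0r add0r.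
  by apply: local_mult.
have mun : mu n != 0.
  apply/negP => /eqP hmu; move: wi0; rewrite (@vander_zero _ _ b w bi) ?eqxx //.
  move=> k kn; case: (ltnP k n.-1) => hk; first exact: hw.
  have -> : k = n.-1 by lia.
  rewrite -[RHS]hmu /mu; apply: eq_bigr => i _.
  by rewrite /c -{2}(prednK n0) exprS mulrA divfK.
have Fn : F`_n = (mu n * l ^+ (N - n)) *+ 'C(N, n).
  rewrite coef_stepF (_ : (n == 0%N) = false); last by lia.
  by rewrite add0r /mu mulr_suml; congr (_ *+ _); apply: eq_bigr => i _; rewrite mulrA.
have Fn1 : F`_n.+1 = (mu n.+1 * l ^+ (N - n.+1)) *+ 'C(N, n.+1).
  rewrite coef_stepF /= add0r /mu mulr_suml; congr (_ *+ _).
  by apply: eq_bigr => i _; rewrite mulrA.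
have F0 : F != 0.
  apply/eqP => F0'; move: Fn; rewrite F0' coef0 => /esym/eqP.
  rewrite -mulr_natr !mulf_eq0 (negbTE mun) expf_eq0 (negbTE l0) andbF /=.
  by rewrite (negbTE (bin_neq0 _ _)) //; [lia | move=> k hk; apply: hchar; lia].
have sF : (size F <= N.+1)%N.
  apply/leq_sizeP => j hj; rewrite coef_stepF (_ : (j == 0%N) = false); last by lia.
  by rewrite bin_small ?mulr0n ?addr0 //; lia.
have sQ : size Q = (n * m.+1).+1.
  have Q0 : Q != 0.
    rewrite /Q prodf_seq_neq0; apply/allP => x _ /=.
    by rewrite expf_neq0 // -size_poly_gt0 size_XsubC.
  have sQ0 : (0 < size Q)%N by rewrite size_poly_gt0.
  rewrite -(prednK sQ0) /Q prodrXl size_exp.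
  by rewrite size_prod_XsubC /= size_map size_index_enum_ord mulnC.
have part1 : (n * m.+1 <= N)%N.
  by rewrite -ltnS; apply: leq_trans sF; rewrite -sQ; apply: dvdp_leq.
split => // heq.
have sFQ : size Q = size F.
  by apply/eqP; rewrite eqn_leq dvdp_leq //= sQ heq; exact: sF.
have /eqpP [[c1 c2] /andP [c10 c20] /= hc] : Q %= F by rewrite -dvdp_size_eqp // sFQ.
have E0 : c1 * P`_0 = c2 * F`_n.
  by have := congr1 (fun p : {poly R} => p`_n) hc; rewrite /= !coefZ QP coefXnM ltnn subnn.
have E1 : c1 * P`_1 = c2 * F`_n.+1.
  by have := congr1 (fun p : {poly R} => p`_n.+1) hc; rewrite /= !coefZ QP coefXnM ltnNge leqnSn /= subSnn.
have P1 : P`_1 = P`_0 * ((\sum_(i <- r) (- a i)^-1) *+ n).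
  rewrite /P (@good_prod _ _ _ _ (fun i => (- a i)^-1 *+ n)) ?sumrMnl //.
  move=> i; apply: good_exp; rewrite !coefB !coefX !coefC /= subr0 sub0r mulfV //.
  by rewrite oppr_eq0.
have P0 : P`_0 != 0.
  rewrite -horner_coef0 /P horner_prod prodf_seq_neq0; apply/allP => i _ /=.
  by rewrite horner_exp hornerXsubC sub0r expf_neq0 // oppr_eq0.
have mu1 : mu n.+1 = (\sum_j b j) * mu n by apply: mu_rec.
have hb : ((n.+1)%:R * ('C(N, n.+1))%:R = (d.-1)%:R * ('C(N, n))%:R :> R).
  by rewrite -!natrM mul_bin_left; congr (_ * _)%:R; rewrite /N; lia.
have hl : l ^+ (N - n) = l * l ^+ (N - n.+1).
  by rewrite -exprS; congr (_ ^+ _); rewrite /N; lia.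
apply: (mulfI (mulf_neq0 c10 P0)).
rewrite {1}E0 (_ : c1 * P`_0 * (- l * (n * n.+1)%:R * \sum_i (a i)^-1) =
    l * (n.+1)%:R * (c1 * P`_1)); last first.
  rewrite P1 (_ : \sum_(i <- r) (- a i)^-1 = - \sum_i (a i)^-1).
    by rewrite -mulr_natr natrM; ring.
  by rewrite /r -sumrN; apply: eq_bigr => i _; rewrite invrN.
rewrite E1 Fn Fn1 mu1 hl -[_ *+ 'C(N, n)]mulr_natr -[_ *+ 'C(N, n.+1)]mulr_natr.
transitivity (c2 * mu n * l * l ^+ (N - n.+1) * (\sum_j b j) * ((d.-1)%:R * ('C(N, n))%:R)).
  ring.
rewrite -hb; ring.
Qed.


Import FinRing.Theory.

Lemma natFp_neq0 p k : prime p -> (0 < k < p)%N -> (k%:R : 'F_p) != 0.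
Proof.
move=> hp /andP[k0 kp]; rewrite -(dvdn_pcharf (pchar_Fp hp)); apply/negP.
by move/(dvdn_leq k0); lia.
Qed.

Lemma sum_group_val (F : finFieldType) (G : {group {unit F}}) :
  (1 < #|G|)%N -> \sum_(g in G) val g = 0.
Proof.
move=> hG; have : G :!=: 1%g by rewrite trivg_card1; apply/negP => /eqP; lia.
case/trivgPn => h hh h1.
have e : \sum_(g in G) val g = val h * \sum_(g in G) val g.
  rewrite [LHS](reindex_inj (mulgI h)) mulr_sumr; apply: eq_big => g /=.
    by rewrite groupMl.
  by [].
have : (1 - val h) * \sum_(g in G) val g = 0 by rewrite mulrBl mul1r -e subrr.
move/eqP; rewrite mulf_eq0 subr_eq0 => /orP[/eqP h1'|/eqP //].
by case/negP: h1; apply/eqP/val_inj; rewrite -h1'.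
Qed.

Lemma inv_pair (F : fieldType) (x l : F) : x != 0 -> l != 0 -> x != l ->
  (x - l)^-1 + (l * l / x - l)^-1 = - l^-1.
Proof.
move=> x0 l0 xl.
have xl' : x - l != 0 by rewrite subr_eq0.
have lx' : l - x != 0 by rewrite subr_eq0 eq_sym.
rewrite (_ : l * l / x - l = l * (l - x) / x); last by field.
field.
by rewrite l0 x0 lx' xl'.
Qed.

Lemma unit_neq0 (F : finFieldType) (u : {unit F}) : val u != 0.
Proof. by rewrite -unitfE; exact: (valP u). Qed.

Lemma sum_inv_shift (F : finFieldType) (G : {group {unit F}}) (lam : {unit F}) :
  lam \in G ->
  (\sum_(g in G) (val g - val lam)^-1) *+ 2 = - (val lam)^-1 *+ (#|G|.-1).
Proof.
move=> hl; set l := val lam.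
have l0 : l != 0 by exact: unit_neq0.
have hinj : injective (fun g : {unit F} => (lam * lam * g^-1)%g).
  by move=> x y /= /mulgI /invg_inj.
have e : \sum_(g in G) (val g - l)^-1 = \sum_(g in G) (l * l / val g - l)^-1.
  rewrite [LHS](reindex_inj hinj); apply: eq_big => g /=.
    by rewrite groupMl ?groupM ?groupV.
  by [].
rewrite mulr2n {2}e -big_split /= (big_setD1 lam hl) /= subrr invr0 add0r.
rewrite (_ : l * l / l - l = 0) ?invr0 ?add0r; last by rewrite mulfK // subrr.
rewrite (eq_bigr (fun _ => - l^-1)); last first.
  move=> g; rewrite !inE => /andP[gl hg].
  apply: inv_pair => //; first exact: unit_neq0.
by rewrite sumr_const (cardsD1 lam G) hl.
Qed.

Lemma card_prodset_le (F : finFieldType) (A B : {set F}) :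
  (#|prodset A B| <= #|A| * #|B|)%N.
Proof.
by rewrite /prodset curry_imset2X; apply: leq_trans (leq_imset_card _ _) _; rewrite cardsX.
Qed.

Lemma sum_prodset (F : finFieldType) (A B : {set F}) (f : F -> F) :
  #|prodset A B| = (#|A| * #|B|)%N ->
  \sum_(s in prodset A B) f s = \sum_(a in A) \sum_(b in B) f (a * b).
Proof.
move=> hc; rewrite /prodset curry_imset2X big_imset /=.
  rewrite pair_big_dep /=; apply: eq_big => -[a b] //=.
  by rewrite !inE.
by apply/imset_injP; rewrite cardsX -hc /prodset curry_imset2X.
Qed.

Lemma sum_shift (F : finFieldType) (G : {group {unit F}}) (lam : {unit F}) (f : F -> F) :
  f 0 = 0 -> lam \in G ->
  \sum_(s in shift_nonzero G (val lam)) f s = \sum_(g in G) f (val g - val lam).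
Proof.
move=> f0 hl; rewrite /shift_nonzero.
have inj : injective (fun g : {unit F} => val g - val lam) by move=> x y /addIr /val_inj.
have h0 : 0 \in [set val g - val lam | g in G] by apply/imsetP; exists lam; rewrite ?subrr.
rewrite -[RHS](big_imset f (in2W inj)) [RHS](big_setD1 _ h0) f0 /= add0r.
by [].
Qed.

Lemma final_arith (F : fieldType) (l SA SB IA IB : F) (m n d : nat) :
  l != 0 -> (m * n)%N = d.-1 -> (0 < d)%N -> (0 < m)%N -> (0 < n)%N ->
  (d.-1)%:R * SB = - l * (n * n.+1)%:R * IA ->
  (d.-1)%:R * SA = - l * (m * m.+1)%:R * IB ->
  SA * SB = - (l *+ d) ->
  (IA * IB) *+ 2 = - l^-1 *+ d.-1 ->
  l ^+ 2 * ((m * n)%:R) ^+ 2 * ((m.-1)%:R * (n.-1)%:R) = 0.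
Proof.
move=> l0 emn d0 m0 n0 e1 e2 e3 e4.
set M : F := m%:R; set N : F := n%:R.
have hD1 : (d.-1)%:R = M * N by rewrite -emn natrM.
have hD : (d%:R : F) = M * N + 1 by rewrite -[d](prednK d0) mulrSr hD1.
have hM1 : (m.-1)%:R = M - 1 by rewrite /M -{2}(prednK m0) mulrSr addrK.
have hN1 : (n.-1)%:R = N - 1 by rewrite /N -{2}(prednK n0) mulrSr addrK.
have hMM : ((m * m.+1)%:R : F) = M * (M + 1) by rewrite natrM mulrSr.
have hNN : ((n * n.+1)%:R : F) = N * (N + 1) by rewrite natrM mulrSr.
rewrite hD1 hNN in e1; rewrite hD1 hMM in e2.
rewrite -mulr_natr hD in e3; rewrite -mulr_natr -[_ *+ d.-1]mulr_natr hD1 in e4.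
rewrite hM1 hN1 natrM -/M -/N.
have E : 2 * l * ((M * N * SA) * (M * N * SB)) =
         2 * l * ((- l * (M * (M + 1)) * IB) * (- l * (N * (N + 1)) * IA)) by rewrite e1 e2.
have L : 2 * l * ((M * N * SA) * (M * N * SB)) = - (2 * l ^+ 2 * (M * N) ^+ 2 * (M * N + 1)).
  by transitivity (2 * l * (M * N) ^+ 2 * (SA * SB)); [ring | rewrite e3; ring].
have Rr : 2 * l * ((- l * (M * (M + 1)) * IB) * (- l * (N * (N + 1)) * IA)) =
          - (l ^+ 2 * (M * (M + 1)) * (N * (N + 1)) * (M * N)).
  transitivity (l ^+ 2 * l * (M * (M + 1)) * (N * (N + 1)) * (IA * IB * 2)); first ring.
  rewrite e4.
  transitivity (- (l ^+ 2 * (M * (M + 1)) * (N * (N + 1)) * (M * N) * (l * l^-1))); first ring.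
  by rewrite mulfV // mulr1.
transitivity (2 * l ^+ 2 * (M * N) ^+ 2 * (M * N + 1) -
              l ^+ 2 * (M * (M + 1)) * (N * (N + 1)) * (M * N)); first ring.
by apply/eqP; rewrite subr_eq0; apply/eqP/oppr_inj; rewrite -L E Rr.
Qed.

Lemma two_le (d q : nat) : (d %| q)%N -> (d < q)%N -> (2 * d <= q)%N.
Proof.
case/dvdnP => k ->; case: k => [|[|k]]; rewrite ?mul0n ?mul1n ?ltnn //.
by move=> _; apply: leq_mul.
Qed.

Lemma ar1 x y : (y <= x.-1)%N -> (1 < y)%N -> (1 < x)%N.
Proof. lia. Qed.

Lemma ar2 k x y q : (0 < k <= x + y)%N -> (y <= x.-1)%N -> (2 * x <= q.-1)%N ->
  (1 < x)%N -> (0 < k < q)%N.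
Proof. lia. Qed.

Lemma ar3 m n d : (n * m.+1 <= d + n.-1)%N -> (d.-1 <= m * n)%N -> (0 < n)%N ->
  (0 < m)%N -> (0 < d)%N ->
  [/\ (m * n = d.-1)%N, (n * m.+1 = d + n.-1)%N & (m * n.+1 = d + m.-1)%N].
Proof. rewrite !mulnS (mulnC n m) => h1 h2 n0 m0 d0; split; lia. Qed.

Lemma ar4 k x q : (0 < k)%N -> (k <= x)%N -> (2 * x <= q.-1)%N -> (0 < k < q)%N.
Proof. lia. Qed.

Lemma ar5 x : (1 < x)%N -> (0 < x.-1)%N.
Proof. lia. Qed.

Lemma ar6 x y : (y <= x.-1)%N -> (y.-1 <= x)%N.
Proof. lia. Qed.

Unset Implicit Arguments.

Theorem theorem1p10 (p : nat) (hp : prime p) (hodd : odd p)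
  (G : {group {unit 'F_p}}) (hG : G \proper [set: {unit 'F_p}])
  (lam : {unit 'F_p}) (hlam : lam \in G) :
  ~ (exists A B : {set 'F_p},
        [/\ 0 \notin A, 0 \notin B, (1 < #|A|)%N, (1 < #|B|)%N &
            prodset A B = shift_nonzero G (val lam)]).
Proof.
case=> A [B [A0 B0 A1 B1 hAB]].
have l0 : val lam != 0 := unit_neq0 lam.
have gd : forall g, g \in G -> val g ^+ #|G| = 1.
  by move=> g hg; rewrite -val_unitX expg_cardG.
have ld : val lam ^+ #|G| = 1 := gd lam hlam.
have memS : forall s, s \in shift_nonzero G (val lam) -> (s + val lam) ^+ #|G| = 1.
  by move=> s; rewrite /shift_nonzero => /setD1P [s0 /imsetP [g hg ->]]; rewrite subrK gd.
have hmem : forall a b, a \in A -> b \in B -> (a * b + val lam) ^+ #|G| = 1.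
  by move=> a b ha hb; apply: memS; rewrite -hAB; apply: imset2_f.
have cardS : #|shift_nonzero G (val lam)| = #|G|.-1.
  have inj : injective (fun g : {unit 'F_p} => val g - val lam).
    by move=> x y /addIr /val_inj.
  have h0 : 0 \in [set val g - val lam | g in G].
    by apply/imsetP; exists lam; rewrite ?subrr.
  have := cardsD1 0 [set val g - val lam | g in G]; rewrite h0 card_imset // => e.
  by rewrite /shift_nonzero e.
have Sle : (#|G|.-1 <= #|A| * #|B|)%N by rewrite -cardS -hAB card_prodset_le.
have [a0 ha0] : exists a, a \in A by apply/card_gt0P; exact: ltnW A1.
have [b0 hb0] : exists b, b \in B by apply/card_gt0P; exact: ltnW B1.
have a00 : a0 != 0 by apply: contraNneq A0 => <-.
have b00 : b0 != 0 by apply: contraNneq B0 => <-.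
have nle : (#|B| <= #|G|.-1)%N.
  rewrite -cardS -hAB -(card_imset B (mulfI a00)); apply: subset_leq_card.
  by apply/subsetP => x /imsetP [b hb ->]; apply: imset2_f.
have mle : (#|A| <= #|G|.-1)%N.
  rewrite -cardS -hAB -(card_imset A (mulIf b00)); apply: subset_leq_card.
  by apply/subsetP => x /imsetP [a ha ->]; apply: imset2_f.
have dp : (2 * #|G| <= p.-1)%N.
  have hc : #|[set: {unit 'F_p}]| = p.-1 by rewrite finalg.card_finField_unit card_Fp.
  have dv : (#|G| %| p.-1)%N by rewrite -hc cardSg ?subsetT.
  have lt : (#|G| < p.-1)%N by rewrite -hc proper_card.
  exact: two_le dv lt.
have d1 : (1 < #|G|)%N by exact: ar1 nle B1.
have hchar : forall k, (0 < k <= #|G| + #|B|)%N -> k%:R != 0 :> 'F_p.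
  by move=> k hk; apply: natFp_neq0 => //; exact: ar2 hk nle dp d1.
have hchar2 : forall k, (0 < k <= #|G| + #|A|)%N -> k%:R != 0 :> 'F_p.
  by move=> k hk; apply: natFp_neq0 => //; exact: ar2 hk mle dp d1.
pose ea := fun i : 'I_#|A| => enum_val i.
pose eb := fun i : 'I_#|B| => enum_val i.
have eaA : forall i, ea i \in A := fun i => enum_valP i.
have ebB : forall i, eb i \in B := fun i => enum_valP i.
have eainj : injective ea := @enum_val_inj _ _.
have ebinj : injective eb := @enum_val_inj _ _.
have ea0 : forall i, ea i != 0 by move=> i; apply: contraNneq A0 => <-.
have eb0 : forall i, eb i != 0 by move=> i; apply: contraNneq B0 => <-.
have [st1 eq1] := stepanov (ltnW B1) d1 eainj ebinj ea0 eb0 l0 ld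
  (fun i j => hmem _ _ (eaA i) (ebB j)) hchar.
have hab2 : forall i j, (eb i * ea j + val lam) ^+ #|G| = 1.
  by move=> i j; rewrite mulrC hmem.
have [st2 eq2] := stepanov (ltnW A1) d1 ebinj eainj eb0 ea0 l0 ld hab2 hchar2.
have [emn h1 h2] := ar3 st1 Sle (ltnW B1) (ltnW A1) (ltnW d1).
have e1 := eq1 h1.
have e2 := eq2 h2.
have SA : \sum_i ea i = \sum_(x in A) x by rewrite (big_enum_val (fun x : 'F_p => x)).
have SB : \sum_i eb i = \sum_(x in B) x by rewrite (big_enum_val (fun x : 'F_p => x)).
have IA : \sum_i (ea i)^-1 = \sum_(x in A) x^-1.
  by rewrite (big_enum_val (fun x : 'F_p => x^-1)).
have IB : \sum_i (eb i)^-1 = \sum_(x in B) x^-1.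
  by rewrite (big_enum_val (fun x : 'F_p => x^-1)).
rewrite SB IA in e1; rewrite SA IB in e2.
have hcard : #|prodset A B| = (#|A| * #|B|)%N by rewrite hAB cardS emn.
have e3 : (\sum_(x in A) x) * (\sum_(x in B) x) = - (val lam *+ #|G|).
  rewrite mulr_suml; under eq_bigr do rewrite mulr_sumr.
  rewrite -(sum_prodset (fun s => s) hcard) hAB (@sum_shift _ G lam (fun s => s) erefl hlam).
  by rewrite sumrB sum_group_val // sumr_const sub0r.
have e4 : (\sum_(x in A) x^-1) * (\sum_(x in B) x^-1) *+ 2 = - (val lam)^-1 *+ #|G|.-1.
  rewrite mulr_suml; under eq_bigr do rewrite mulr_sumr.
  under eq_bigr do under eq_bigr do rewrite -invfM.
  rewrite -(sum_prodset (fun s => s^-1) hcard) hAB.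
  by rewrite (@sum_shift _ G lam (fun s => s^-1) (invr0 _) hlam) sum_inv_shift.
have := final_arith l0 emn (ltnW d1) (ltnW A1) (ltnW B1) e1 e2 e3 e4.
have nz : forall k, (0 < k)%N -> (k <= #|G|)%N -> k%:R != 0 :> 'F_p.
  by move=> k k0 kd; apply: natFp_neq0 => //; exact: ar4 k0 kd dp.
have n1 : (#|A| * #|B|)%:R != 0 :> 'F_p.
  by apply: nz; rewrite emn ?ar5 ?leq_pred.
have n2 : (#|A|.-1)%:R != 0 :> 'F_p by apply: nz; [exact: ar5 | exact: ar6 mle].
have n3 : (#|B|.-1)%:R != 0 :> 'F_p by apply: nz; [exact: ar5 | exact: ar6 nle].
by move/eqP; rewrite !mulf_eq0 (negbTE l0) (negbTE n1) (negbTE n2) (negbTE n3).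
Qed.
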